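(* Let $S \subseteq \mathbb{R}^n$ be nonempty, closed and convex, and let $F_i = f_i + g_i$, $i=1,\dots,m$, where each $f_i \colon S \to \mathbb{R}$ is continuously differentiable and each $g_i \colon S \to \mathbb{R}$ is convex. For $\ell>0$ define \[ w_\ell(x) := \max_{y \in S} \min_{i = 1,\dots,m} \left\{ \nabla f_i(x)^\top (x - y) + g_i(x) - g_i(y) - \frac{\ell}{2}\|x - y\|^2 \right\}, \quad x\in S. \] Let $\ell > 0$ and let $r$ be any scalar with $r \ge \ell$. Then \[ w_r(x) \le w_\ell(x) \le \frac{r}{\ell} w_r(x) \quad \text{for all } x \in S. \] *)

(* Defs.v *)
From HB Require Import structures.
From mathcomp Require Import all_boot all_order all_algebra.
From mathcomp Require Import all_classical all_reals all_analysis.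
Set Implicit Arguments. Unset Strict Implicit. Unset Printing Implicit Defensive.
Import Order.TTheory GRing.Theory Num.Theory.
Import numFieldNormedType.Exports.
Local Open Scope classical_set_scope.
Local Open Scope ring_scope.

(* Squared Euclidean norm of a vector of R^n (the canonical norm of 'rV_n in
   MathComp-Analysis is the sup norm, so we write the Euclidean one explicitly). *)
Definition sqnorm2 {R : realType} {n : nat} (v : 'rV[R]_n) : R :=
  \sum_(j < n) (v ord0 j) ^+ 2.

Definition convex_subset {R : realType} {n : nat} (S : set 'rV[R]_n) : Prop :=
  forall x y t, S x -> S y -> 0 <= t -> t <= 1 -> S (t *: x + (1 - t) *: y).

Definition convex_fun_on {R : realType} {n : nat} (S : set 'rV[R]_n)
  (g : 'rV[R]_n -> R) : Prop :=
  forall x y t, S x -> S y -> 0 <= t -> t <= 1 ->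
    g (t *: x + (1 - t) *: y) <= t * g x + (1 - t) * g y.

(* f is continuously differentiable on S: it is differentiable on an open
   neighbourhood U of S and its derivative x |-> 'd f x is continuous on U
   (continuity of every directional derivative, equivalently of all partials). *)
Definition C1_on {R : realType} {n : nat} (S : set 'rV[R]_n)
  (f : 'rV[R]_n -> R) : Prop :=
  exists U : set 'rV[R]_n, [/\ open U, S `<=` U,
    (forall x, U x -> differentiable f x) &
    (forall v : 'rV[R]_n, {within U, continuous (fun x => 'd f x v)})].

Definition wobj {R : realType} {n m : nat} (f g : 'I_m -> 'rV[R]_n -> R)
  (l : R) (x y : 'rV[R]_n) : \bar R :=
  \big[Order.min/+oo%E]_(i < m)
     ('d (f i) x (x - y) + g i x - g i y - l / 2 * sqnorm2 (x - y))%:E.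

Definition w {R : realType} {n m : nat} (S : set 'rV[R]_n)
  (f g : 'I_m -> 'rV[R]_n -> R) (l : R) (x : 'rV[R]_n) : \bar R :=
  ereal_sup [set wobj f g l x y | y in S].

(* Main.v *)
Require Import Defs.
From HB Require Import structures.
From mathcomp Require Import all_boot all_order all_algebra.
From mathcomp Require Import all_classical all_reals all_analysis.
From mathcomp Require Import ring lra.
Import Order.TTheory GRing.Theory Num.Theory.
Import numFieldNormedType.Exports.
Local Open Scope classical_set_scope.
Local Open Scope ring_scope.

Lemma sqnorm2Z (R : realType) (n : nat) (t : R) (v : 'rV[R]_n) :
  sqnorm2 (t *: v) = t ^+ 2 * sqnorm2 v.
Proof.
rewrite /sqnorm2 mulr_sumr; apply: eq_bigr => j _.
by rewrite mxE exprMn.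
Qed.

Theorem theorem4p2 (R : realType) (n m : nat) (S : set 'rV[R]_n)
  (f g : 'I_m -> 'rV[R]_n -> R) (l r : R) :
  (0 < m)%N ->
  S !=set0 -> closed S -> convex_subset S ->
  (forall i, C1_on S (f i)) ->
  (forall i, convex_fun_on S (g i)) ->
  0 < l -> l <= r ->
  forall x, S x ->
    (w S f g r x <= w S f g l x)%E /\
    (w S f g l x <= (r / l)%:E * w S f g r x)%E.
Proof.
move=> _ _ _ cvxS _ cvxg l0 lr x Sx.
have r0 : 0 < r by apply: lt_le_trans lr.
have N0 : forall v : 'rV[R]_n, 0 <= sqnorm2 v.
  by move=> v; apply: sumr_ge0 => j _; apply: sqr_ge0.
split.
  apply: ge_ereal_sup => _ [y Sy <-].
  apply: (le_trans _ (ereal_sup_ubound _)); last by exists y.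
  rewrite /wobj; apply: le_bigmin; first by rewrite leey.
  move=> i _. apply: le_trans; first exact: (bigmin_le _ i).
  rewrite lee_fin; apply: lerB => //.
  apply: ler_wpM2r => //; lra.
apply: ge_ereal_sup => _ [y Sy <-].
set t := l / r.
have t0 : 0 < t by rewrite divr_gt0.
have t1 : t <= 1 by rewrite ler_pdivrMr // mul1r.
have rt : r * t = l by rewrite /t mulrCA divff ?mulr1 // gt_eqF.
set z := t *: y + (1 - t) *: x.
have Sz : S z by apply: cvxS => //; apply: ltW.
have xz : x - z = t *: (x - y).
  by apply/rowP => j; rewrite !mxE; ring.
have key : (t%:E * wobj f g l x y <= wobj f g r x z)%E.
  apply: le_bigmin; first by rewrite leey.
  move=> i _.
  have := bigmin_le +oo%E i (fun i => ('d (f i) x (x - y) + g i x - g i y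
      - l / 2 * sqnorm2 (x - y))%:E).
  move=> /(lee_wpmul2l (ltW t0 : (0 <= t%:E)%E)) H.
  apply: (le_trans H); rewrite -EFinM lee_fin.
  rewrite xz sqnorm2Z.
  have -> : 'd (f i) x (t *: (x - y)) = t * 'd (f i) x (x - y).
    by rewrite linearZ.
  have hg := cvxg i y x t Sy Sx (ltW t0) t1.
  rewrite -/z in hg.
  have : r / 2 * (t ^+ 2 * sqnorm2 (x - y)) = t * (l / 2 * sqnorm2 (x - y)).
    by rewrite -rt; ring.
  move=> ->.
  move: hg; set D := 'd _ _ _; set N := sqnorm2 _; set a := g i x; set b := g i y;
  set c := g i z => hg.
  rewrite !mulrDr !mulrN !mulrA; lra.
have sup : (wobj f g r x z <= w S f g r x)%E by apply: ereal_sup_ubound; exists z.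
have H2 := lee_wpmul2l (ltW (divr_gt0 r0 l0) : (0 <= (r / l)%:E)%E) (le_trans key sup).
apply: le_trans H2.
rewrite muleA -EFinM /t mulrA divfK ?gt_eqF // divff ?gt_eqF // mul1e //.
Qed.
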